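(* Let $k\ge1$, and let $a,b$ be integers with $b\ge1$, $0\le a\le b$ and $k\equiv a\pmod b$. Then $N\big((k+1+a-b)(k-a)/b,\;k\big)=(k-a)/b$.
   Context: For $n>k\ge1$, $N(n,k)$ is the nullity of the $n\times n$ skew-symmetric Toeplitz matrix $A(n,k)$ whose first $k$ superdiagonals have all entries $1$ and whose remaining superdiagonals have all entries $0$. This nullity depends only on $n\bmod (k^2+k)$, and $N(n,k)$ is defined for every integer $n$ as $N(n',k)$ for any $n'>k$ with $n'\equiv n\pmod{k^2+k}$. *)

(* Defs.v *)
From mathcomp Require Import all_boot all_order all_algebra.
Set Implicit Arguments. Unset Strict Implicit. Unset Printing Implicit Defensive.
Import Order.TTheory GRing.Theory Num.Theory.
Local Open Scope ring_scope.

Definition Amat (n k : nat) : 'M[rat]_n :=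
  \matrix_(i < n, j < n)
    if ((i < j)%N && (j <= i + k)%N) then 1
    else if ((j < i)%N && (i <= j + k)%N) then -1 else 0.

Definition nullity (n k : nat) : nat := (n - \rank (Amat n k))%N.

Definition rep (n : int) (k : nat) : nat :=
  (k.+1 + `|((n - k.+1%:Z) %% (k ^ 2 + k)%N%:Z)%Z|)%N.

(* N(n,k) for an arbitrary integer n (paper's extension by periodicity). *)
Definition Nnull (n : int) (k : nat) : nat := nullity (rep n k) k.

(* Main.v *)
Require Import Defs.
From mathcomp Require Import all_boot all_order all_algebra.
From mathcomp Require Import zify ring lra.
Set Implicit Arguments. Unset Strict Implicit. Unset Printing Implicit Defensive.
Import Order.TTheory GRing.Theory Num.Theory.
Local Open Scope ring_scope.

Definition ind (i : nat) (t : int) : rat := (nat_of_bool (i%:Z < t))%:R.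

Lemma Amat_ind (N k : nat) (i j : 'I_N) :
  Amat N k i j = ind i j%:Z - ind i (j%:Z - k%:Z) - ind i (j%:Z + k%:Z + 1) + ind i (j%:Z + 1).
Proof.
rewrite /Amat mxE /ind.
have [h1|h1] := boolP (i < j)%N; rewrite /=.
- have -> : (i%:Z < j%:Z) = true by lia.
  have -> : (i%:Z < j%:Z + k%:Z + 1) = true by lia.
  have -> : (i%:Z < j%:Z + 1) = true by lia.
  have [h2|h2] := boolP (j <= i + k)%N.
  + have -> : (i%:Z < j%:Z - k%:Z) = false by lia.
    by rewrite ?mulr0n ?mulr1n; ring.
  + have -> : (i%:Z < j%:Z - k%:Z) = true by lia.
    have -> : ((j < i) && (i <= j + k))%N = false by lia.
    by rewrite ?mulr0n ?mulr1n; ring.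
- have -> : (i%:Z < j%:Z) = false by lia.
  have -> : (i%:Z < j%:Z - k%:Z) = false by lia.
  have [h3|h3] := boolP ((j < i) && (i <= j + k))%N.
  + have -> : (i%:Z < j%:Z + 1) = false by lia.
    have -> : (i%:Z < j%:Z + k%:Z + 1) = true by lia.
    by rewrite ?mulr0n ?mulr1n; ring.
  + have [h4|h4] := boolP (i == j :> nat).
    * have -> : (i%:Z < j%:Z + 1) = true by lia.
      have -> : (i%:Z < j%:Z + k%:Z + 1) = true by lia.
      by rewrite ?mulr0n ?mulr1n; ring.
    * have -> : (i%:Z < j%:Z + 1) = false by lia.
      have -> : (i%:Z < j%:Z + k%:Z + 1) = false by lia.
      by rewrite ?mulr0n ?mulr1n; ring.
Qed.

Section Seq.
Variables (N k : nat) (u : 'rV[rat]_N).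
Definition Su (t : int) : rat := \sum_(i < N) u 0 i * ind i t.
Definition FF (j : int) := Su (j + k%:Z + 1) - Su (j + 1) - Su j + Su (j - k%:Z).

Lemma mulA_F (j : 'I_N) : (u *m Amat N k) 0 j = - FF j%:Z.
Proof.
rewrite mxE /FF /Su -!sumrB -big_split /= -sumrN.
apply: eq_bigr => i _; rewrite Amat_ind; ring.
Qed.

Lemma Su_le0 t : t <= 0 -> Su t = 0.
Proof.
move=> h; rewrite /Su big1 // => i _; rewrite /ind.
have -> : (i%:Z < t) = false by lia.
by rewrite mulr0n mulr0.
Qed.

Lemma Su_geN t : N%:Z <= t -> Su t = Su N%:Z.
Proof.
move=> h; rewrite /Su; apply: eq_bigr => i _; rewrite /ind.
have hi := ltn_ord i.
have -> : (i%:Z < t) = true by lia.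
have -> : (i%:Z < N%:Z) = true by lia.
by [].
Qed.

Lemma Su_step (i : 'I_N) : Su (i%:Z + 1) - Su i%:Z = u 0 i.
Proof.
rewrite /Su -sumrB (bigD1 i) //= big1 ?addr0.
  rewrite /ind. have -> : (i%:Z < i%:Z + 1) = true by lia.
  have -> : (i%:Z < i%:Z) = false by lia. by rewrite mulr0n mulr0 subr0 mulr1.
move=> j hj; rewrite /ind.
have hj' : (j : nat) != i by apply/eqP => e; move/eqP: hj; apply; apply: val_inj.
have -> : (j%:Z < i%:Z + 1) = (j%:Z < i%:Z) by lia.
by rewrite subrr.
Qed.

Lemma ker_F : u *m Amat N k = 0 <-> (forall j : nat, (j < N)%N -> FF j%:Z = 0).
Proof.
split.
- move=> h j hj. have := mulA_F (Ordinal hj). rewrite h mxE => /eqP.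
  by rewrite eq_sym oppr_eq0 => /eqP.
- move=> h; apply/rowP => j; rewrite mulA_F mxE h ?oppr0 //.
Qed.
End Seq.

Definition Cval (y : int -> rat) (m : nat) (r : int) : rat :=
  if r <= 0 then y (r + m%:Z) - y r
  else if r == 1 then y (1 + m%:Z) else y (r + m%:Z) - y (r - 1).

Section Tele.
Variables (k : nat) (S y : int -> rat) (L : int).
Hypothesis H0 : forall t, t <= 0 -> S t = 0.
Hypothesis Hrec : forall t, 1 <= t -> t <= L -> S t = S (t - k%:Z - 1) + y t.
Hypothesis yper : forall p e, y (p + e * k%:Z) = y p.

Definition DD t := S (t + 1) - S t.

Lemma telesc (j : nat) t' : - k%:Z <= t' -> t' + j%:Z * (k%:Z + 1) + 1 <= L ->
  DD (t' + j%:Z * (k%:Z + 1)) = DD t' + y (t' + 1 + j%:Z) - y (t' + 1).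
Proof.
elim: j => [|j IH] h1 h2.
  rewrite mul0r !addr0; ring.
have hL : t' + j%:Z * (k%:Z + 1) + 1 <= L by nia.
have IH' := IH h1 hL.
rewrite /DD.
set t := t' + j.+1%:Z * (k%:Z + 1).
rewrite (Hrec (t := t + 1)); last by rewrite /t; nia. 2: rewrite /t; nia.
rewrite (Hrec (t := t)); last by rewrite /t; nia. 2: rewrite /t; nia.
have e1 : t + 1 - k%:Z - 1 = (t' + j%:Z * (k%:Z + 1)) + 1 by rewrite /t; lia.
have e2 : t - k%:Z - 1 = t' + j%:Z * (k%:Z + 1) by rewrite /t; lia.
rewrite e1 e2.
have e3 : t + 1 = (t' + 1 + j.+1%:Z) + (j.+1%:Z) * k%:Z by rewrite /t; lia.
have e4 : t = (t' + 1 + j%:Z) + (j.+1%:Z) * k%:Z by rewrite /t; lia.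
rewrite e3 yper e4 yper.
move: IH'; rewrite /DD => IH'; lra.
Qed.

Lemma Dformula (m M : nat) (e : int) (r : int) :
  M%:Z = m%:Z + e * k%:Z -> 1 - k%:Z <= r -> r <= k%:Z ->
  r - 1 + M%:Z * (k%:Z + 1) + 1 <= L ->
  DD (r - 1 + M%:Z * (k%:Z + 1)) = Cval y m r.
Proof.
move=> hM h1 h2 h3.
rewrite telesc; [|lia|lia].
have -> : r - 1 + 1 + M%:Z = (r + m%:Z) + e * k%:Z by lia.
rewrite yper (_ : r - 1 + 1 = r); last by ring.
rewrite /Cval /DD.
have hL1 : r <= L by nia.
case: ifP => hr.
  rewrite (_ : r - 1 + 1 = r); last by ring.
  rewrite !H0; [ring|lia..].
case: ifP => /eqP hr1.
  subst r. rewrite (_ : 1 - 1 + 1 = 1); last by ring.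
  rewrite (Hrec (t := 1)); [|lia|lia].
  rewrite !H0; [ring|lia..].
rewrite (_ : r - 1 + 1 = r); last by ring.
rewrite (Hrec (t := r)); [|lia|lia].
rewrite (Hrec (t := r - 1)); [|lia|lia].
rewrite !H0; [ring|lia..].
Qed.
End Tele.

Lemma vanish (k m s0 : nat) (yv : int -> rat) :
  (forall p e, yv (p + e * k%:Z) = yv p) ->
  (s0 <= k)%N -> (1 <= m)%N \/ s0 = 0%N ->
  (forall r, 1 - s0%:Z <= r -> r <= k%:Z - s0%:Z -> Cval yv m r = 0) ->
  (forall c : int, 1 <= c -> c <= m%:Z -> yv c = 0) ->
  forall t, 1 <= t -> t <= k%:Z -> yv t = 0.
Proof.
move=> yper hs hm hC hpin.
have up : forall n : nat, forall p, 1 <= p -> p <= n%:Z -> p <= k%:Z - s0%:Z -> yv p = 0.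
  elim=> [|n IH] p h1 h2 h3; first lia.
  have [hp|hp] := boolP (p <= m%:Z); first exact: hpin.
  have [hp1|hp1] := boolP (p == m%:Z + 1).
    move/eqP: hp1 => ->. have h := hC 1 ltac:(lia) ltac:(lia).
    move: h; rewrite /Cval eqxx. have -> : (1 <= 0 :> int) = false by lia.
    by rewrite addrC.
  have := hC (p - m%:Z); rewrite /Cval.
  have -> : (p - m%:Z <= 0) = false by lia.
  have -> : (p - m%:Z == 1) = false by lia.
  rewrite (_ : p - m%:Z + m%:Z = p); last by ring.
  move=> /(_ _ _)/eqP. rewrite subr_eq0 => /(_ ltac:(lia) ltac:(lia)) /eqP ->.
  apply: IH; lia.
have down : forall n : nat, forall p, 1 - s0%:Z <= p -> p <= 0 -> m%:Z - p <= n%:Z -> yv p = 0.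
  elim=> [|n IH] p h1 h2 h3.
    have : s0 = 0%N by lia. move=> hs0; lia.
  have := hC p; rewrite /Cval.
  have -> : (p <= 0) = true by lia.
  move=> /(_ h1 ltac:(lia))/eqP. rewrite subr_eq0 => /eqP <-.
  have [hq|hq] := boolP (1 <= p + m%:Z); first by apply: hpin; lia.
  apply: IH; lia.
move=> t h1 h2.
have [ht|ht] := boolP (t <= k%:Z - s0%:Z); first by apply: (up `|t|%N); lia.
rewrite -(yper t (-1)).
have := down (absz (m%:Z - (t - k%:Z))%R) (t + -1 * k%:Z). apply; lia.
Qed.

Lemma modz_per (k : nat) (p e : int) : ((p + e * k%:Z) %% k%:Z)%Z = (p %% k%:Z)%Z.
Proof. by rewrite addrC modzMDl. Qed.

Section Ker.
Variables (N k : nat) (u : 'rV[rat]_N).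
Hypothesis hk : (1 <= k)%N.
Hypothesis hker : u *m Amat N k = 0.

Definition yk (p : int) : rat := Su u (((p - 1) %% k%:Z)%Z + 1).

Lemma yk_per p e : yk (p + e * k%:Z) = yk p.
Proof. by rewrite /yk (_ : p + e * k%:Z - 1 = (p - 1) + e * k%:Z) ?modz_per //; ring. Qed.

Lemma yk_small t : 1 <= t -> t <= k%:Z -> yk t = Su u t.
Proof.
move=> h1 h2; rewrite /yk modz_small; last by lia.
by rewrite subrK.
Qed.

Lemma Hrec_ker t : 1 <= t -> t <= N%:Z + k%:Z -> Su u t = Su u (t - k%:Z - 1) + yk t.
Proof.
have hF := proj1 (ker_F k u) hker.
suff H : forall n : nat, forall t, 1 <= t -> t <= n%:Z -> t <= N%:Z + k%:Z ->
   Su u t = Su u (t - k%:Z - 1) + yk t.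
  move=> h1 h2; apply: (H `|t|%N); lia.
elim=> [|n IH] {}t h1 h2 h3; first lia.
have [ht|ht] := boolP (t <= k%:Z).
  rewrite yk_small // [Su u (t - _ - 1)]Su_le0; [ring|lia].
have hj := hF (absz (t - k%:Z - 1)%R) ltac:(lia).
move: hj; rewrite /FF.
have -> : ((absz (t - k%:Z - 1)%R))%:Z = t - k%:Z - 1 by lia.
rewrite (_ : t - k%:Z - 1 + k%:Z + 1 = t); last by ring.
rewrite (_ : t - k%:Z - 1 + 1 = t - k%:Z); last by ring.
rewrite (IH (t - k%:Z)); [|lia|lia|lia].
rewrite (_ : t - k%:Z = t + (-1) * k%:Z); last by ring.
rewrite yk_per.
rewrite (_ : t + -1 * k%:Z - k%:Z - 1 = t - k%:Z - 1 - k%:Z); last by ring.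
rewrite (_ : t + -1 * k%:Z = t - k%:Z); last by ring.
move=> h; lra.
Qed.

Lemma ker_zero (m M s0 : nat) (e : int) :
  N%:Z = M%:Z * (k%:Z + 1) - s0%:Z -> M%:Z = m%:Z + e * k%:Z ->
  (s0 <= k)%N -> (1 <= m)%N \/ s0 = 0%N -> (m <= k)%N ->
  (forall c : nat, (1 <= c)%N -> (c <= m)%N -> Su u c%:Z = 0) -> u = 0.
Proof.
move=> hN hM hs hm hmk hpin.
have hC : forall r, 1 - s0%:Z <= r -> r <= k%:Z - s0%:Z -> Cval yk m r = 0.
  move=> r h1 h2.
  rewrite -(Dformula (S := Su u) (L := N%:Z + k%:Z) (Su_le0 u) Hrec_ker yk_per hM);
    [|lia|lia|nia].
  rewrite /DD (@Su_geN _ u (r - 1 + M%:Z * (k%:Z + 1) + 1)); last by nia.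
  rewrite (@Su_geN _ u (r - 1 + M%:Z * (k%:Z + 1))); last by nia.
  ring.
have hv := vanish yk_per hs hm hC.
have hv' : forall t, 1 <= t -> t <= k%:Z -> yk t = 0.
  apply: hv => c h1 h2. rewrite yk_small; [|lia|lia].
  have -> : c = (absz c)%:Z by lia.
  apply: hpin; lia.
have hz : forall n : nat, forall t, t <= n%:Z -> t <= N%:Z + k%:Z -> Su u t = 0.
  elim=> [|n IH] t h1 h2; first by apply: Su_le0; lia.
  have [ht|ht] := boolP (t <= 0); first by apply: Su_le0.
  rewrite Hrec_ker; [|lia|lia].
  rewrite IH; [|lia|lia].
  have hmg := modz_ge0 (t - 1) (d := k%:Z) ltac:(lia).
  have hml := ltz_pmod (t - 1) (d := k%:Z) ltac:(lia).
  have hdv := divz_eq (t - 1) k%:Z.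
  move: hmg hml hdv; set q := ((t - 1) %/ k%:Z)%Z; set rr := ((t - 1) %% k%:Z)%Z => hmg hml hdv.
  have -> : yk t = yk ((rr + 1) + q * k%:Z) by congr yk; lia.
  rewrite yk_per hv'; [ring|lia|lia].
apply/rowP => i; have hi := ltn_ord i; rewrite mxE -Su_step !(hz (N + k)%N); [ring|lia..].
Qed.
End Ker.

Section Constr.
Variables (k : nat) (y : int -> rat).

Fixpoint sfr (f n : nat) : rat :=
  match f with 0%N => 0 | f'.+1 => if n is 0%N then 0 else y n%:Z + sfr f' (n - k.+1) end.

Lemma sfr_fuel f : forall g n, (n <= f)%N -> (n <= g)%N -> sfr f n = sfr g n.
Proof.
elim: f => [|f IH] [|g] [|n] //= h1 h2.
congr (_ + _); apply: IH; lia.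
Qed.

Definition Sf (t : int) : rat := if t <= 0 then 0 else sfr (absz t) (absz t).

Lemma Sf_le0 t : t <= 0 -> Sf t = 0.
Proof. by rewrite /Sf => ->. Qed.

Lemma Sf_rec t : 1 <= t -> Sf t = Sf (t - k%:Z - 1) + y t.
Proof.
move=> h.
have [n hn] : exists n : nat, t = n.+1%:Z by exists (absz t).-1; lia.
subst t. rewrite /Sf.
have -> : (n.+1%:Z <= 0) = false by lia.
rewrite /= (sfr_fuel (g := (n.+1 - k.+1)%N)); [|lia|lia].
have [hs|hs] := boolP (n.+1%:Z - k%:Z - 1 <= 0).
  have -> : (n.+1 - k.+1 = 0)%N by lia.
  by rewrite /=; ring.
have -> : absz (n.+1%:Z - k%:Z - 1)%R = (n.+1 - k.+1)%N by lia.
ring.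
Qed.

Variables (N m M s0 : nat) (e : int).
Hypothesis yper : forall p e, y (p + e * k%:Z) = y p.
Hypothesis hN : N%:Z = M%:Z * (k%:Z + 1) - s0%:Z.
Hypothesis hM : M%:Z = m%:Z + e * k%:Z.
Hypothesis hs : (s0 <= k)%N.
Hypothesis hC : forall r, 1 - s0%:Z <= r -> r <= k%:Z - s0%:Z -> Cval y m r = 0.

Definition uf : 'rV[rat]_N := \row_(i < N) (Sf (i%:Z + 1) - Sf i%:Z).

Lemma Sf_flat : forall j : nat, (j <= k)%N -> Sf (N%:Z + j%:Z) = Sf N%:Z.
Proof.
elim=> [|j IH] hj; first by rewrite addr0.
rewrite -(IH ltac:(lia)).
have := Dformula (S := Sf) (y := y) (L := N%:Z + k%:Z) Sf_le0
  (fun t h1 _ => Sf_rec h1) yper (r := N%:Z + j%:Z - N%:Z + 1 - s0%:Z) hM.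
rewrite hC; [|lia|lia].
rewrite /DD.
have -> : N%:Z + j%:Z - N%:Z + 1 - s0%:Z - 1 + M%:Z * (k%:Z + 1) = N%:Z + j%:Z by lia.
move=> /(_ ltac:(lia) ltac:(lia) ltac:(lia)) /eqP.
rewrite subr_eq0 => /eqP <-.
by congr Sf; lia.
Qed.

Lemma Su_uf_nat : forall n : nat, (n <= N)%N -> Su uf n%:Z = Sf n%:Z.
Proof.
elim=> [|n IH] hn.
  by rewrite Su_le0 // Sf_le0.
have := Su_step uf (Ordinal hn). rewrite mxE /= => h.
rewrite (_ : n.+1%:Z = n%:Z + 1); last by lia.
move: h; rewrite IH; [|lia] => h. lra.
Qed.

Lemma Su_uf t : - k%:Z <= t -> t <= N%:Z + k%:Z -> Su uf t = Sf t.
Proof.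
move=> h1 h2.
have [ht|ht] := boolP (t <= 0); first by rewrite Su_le0 // Sf_le0.
have [ht2|ht2] := boolP (t <= N%:Z).
  have -> : t = (absz t)%:Z by lia.
  apply: Su_uf_nat; lia.
rewrite Su_geN; last by lia.
rewrite Su_uf_nat //.
have -> : t = N%:Z + (absz (t - N%:Z)%R)%:Z by lia.
rewrite Sf_flat //; lia.
Qed.

Lemma uf_ker : uf *m Amat N k = 0.
Proof.
apply/(ker_F k uf) => j hj.
rewrite /FF !Su_uf; [|lia..].
rewrite (Sf_rec (t := j%:Z + k%:Z + 1)); last by lia.
rewrite (Sf_rec (t := j%:Z + 1)); last by lia.
rewrite (_ : j%:Z + k%:Z + 1 - k%:Z - 1 = j%:Z); last by ring.
rewrite (_ : j%:Z + 1 - k%:Z - 1 = j%:Z - k%:Z); last by ring.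
rewrite (_ : j%:Z + k%:Z + 1 = (j%:Z + 1) + 1 * k%:Z); last by ring.
rewrite yper. ring.
Qed.

Lemma Su_uf_small c : 1 <= c -> c <= k%:Z -> Su uf c = y c.
Proof.
move=> h1 h2; rewrite Su_uf; [|lia|lia].
rewrite Sf_rec // Sf_le0; [ring|lia].
Qed.
End Constr.

Lemma modz_eqv (x q : int) (d : nat) : 0 <= x - q * d%:Z -> x - q * d%:Z < d%:Z ->
  (x %% d%:Z)%Z = x - q * d%:Z.
Proof.
move=> h1 h2.
rewrite {1}(_ : x = (x - q * d%:Z) + q * d%:Z); last by ring.
by rewrite modz_per modz_small // h1 h2.
Qed.

Section Cls.
Variables (k m a d : nat).
Hypothesis hm : (1 <= m)%N.
Hypothesis hk : k = ((m.+1) * a + m * d)%N.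
Hypothesis hmk : (m <= k)%N.
Let s0 := (m * d)%N.

Definition Pz (p : int) : int := ((p + s0%:Z - 1) %% k%:Z)%Z.
Definition cls (p : int) : int :=
  if Pz p < s0%:Z then ((Pz p %% m%:Z)%Z + 1) else ((Pz p - s0%:Z + 1) %% (m.+1)%:Z)%Z.
Definition yc (c : nat) (p : int) : rat := (nat_of_bool (cls p == c%:Z))%:R.

Lemma yc_per c p e : yc c (p + e * k%:Z) = yc c p.
Proof.
rewrite /yc /cls /Pz (_ : p + e * k%:Z + s0%:Z - 1 = (p + s0%:Z - 1) + e * k%:Z) ?modz_per //.
ring.
Qed.

Lemma Pz_win p : 1 - s0%:Z <= p -> p <= k%:Z - s0%:Z -> Pz p = p + s0%:Z - 1.
Proof. move=> h1 h2; rewrite /Pz modz_small //; rewrite /s0 in h1 h2 *; lia. Qed.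

Lemma cls_big p : 1 <= p -> p <= k%:Z - s0%:Z -> cls p = (p %% (m.+1)%:Z)%Z.
Proof.
move=> h1 h2; rewrite /cls Pz_win //; last by lia.
have -> : (p + s0%:Z - 1 < s0%:Z) = false by lia.
congr (_ %% _)%Z; ring.
Qed.

Lemma cls_neg_hi r : 1 - s0%:Z <= r -> r <= 0 -> 1 <= r + m%:Z -> cls r = r + m%:Z.
Proof.
move=> h1 h2 h3; rewrite /cls Pz_win //; last by rewrite /s0 in h1 *; lia.
have -> : (r + s0%:Z - 1 < s0%:Z) = true by lia.
rewrite (@modz_eqv _ (d%:Z - 1)); rewrite /s0 in h1 *; [ring|nia|nia].
Qed.

Lemma s0_ge_m : (1 <= s0)%N -> (m <= s0)%N.
Proof. rewrite /s0; case: (d) => [|d']; nia. Qed.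

Lemma s0_lt_m : (s0 < m)%N -> s0 = 0%N.
Proof. rewrite /s0; case: (d) => [|d']; nia. Qed.

Lemma Cval_yc c r : (1 <= c)%N -> (c <= m)%N ->
  1 - s0%:Z <= r -> r <= k%:Z - s0%:Z -> Cval (yc c) m r = 0.
Proof.
move=> hc1 hc2 h1 h2.
have hs0 : s0%:Z = m%:Z * d%:Z by rewrite /s0; lia.
have hk' : k%:Z = m.+1%:Z * a%:Z + s0%:Z by rewrite hs0 hk; lia.
rewrite /Cval /yc.
case: ifP => hr.
  suff -> : cls (r + m%:Z) = cls r by ring.
  have [hq|hq] := boolP (r + m%:Z <= 0).
    rewrite /cls !Pz_win; [|lia..].
    have -> : (r + m%:Z + s0%:Z - 1 < s0%:Z) = true by lia.
    have -> : (r + s0%:Z - 1 < s0%:Z) = true by lia.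
    by rewrite (_ : r + m%:Z + s0%:Z - 1 = (r + s0%:Z - 1) + 1 * m%:Z) ?modz_per //; ring.
  rewrite [cls r]cls_neg_hi //; last by lia.
  have [ha|ha] := boolP (1 <= a)%N.
    have hma : m.+1%:Z <= m.+1%:Z * a%:Z by nia.
    rewrite [cls (r + _)]cls_big; [|lia|lia].
    by rewrite modz_small //; lia.
  have ha0 : a = 0%N by lia.
  have hms := s0_ge_m ltac:(lia).
  rewrite /cls /Pz.
  rewrite (@modz_eqv _ 1); [|lia|lia].
  have -> : (r + m%:Z + s0%:Z - 1 - 1 * k%:Z < s0%:Z) = true by lia.
  rewrite (@modz_eqv _ 0); [lia|lia|lia].
case: ifP => /eqP hr1.
  subst r.
  have ha : (1 <= a)%N by move: h2; rewrite hk'; case: (a) => [|a']; lia.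
  have hma : m.+1%:Z <= m.+1%:Z * a%:Z by nia.
  rewrite cls_big; [|lia|lia].
  rewrite (_ : 1 + m%:Z = 0 + 1 * (m.+1)%:Z); last by lia.
  rewrite modz_per modz_small //.
  have -> : (0 == c%:Z) = false by lia.
  by [].
suff -> : cls (r + m%:Z) = cls (r - 1) by ring.
rewrite (cls_big (p := r - 1)); [|lia|lia].
have [hq|hq] := boolP (r + m%:Z <= k%:Z - s0%:Z).
  rewrite cls_big; [|lia|lia].
  by rewrite (_ : r + m%:Z = (r - 1) + 1 * (m.+1)%:Z) ?modz_per //; ring.
have ha : (1 <= a)%N by move: h2; rewrite hk'; case: (a) => [|a']; lia.
have hma : m.+1%:Z <= m.+1%:Z * a%:Z by nia.
have hP : Pz (r + m%:Z) = r + m%:Z - 1 - m.+1%:Z * a%:Z.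
  rewrite /Pz (@modz_eqv _ 1); [lia|lia|lia].
rewrite (@modz_eqv (r - 1) (a%:Z - 1)); [|lia|lia].
rewrite /cls hP.
case: ifP => hP2.
  rewrite modz_small; [ring|nia].
have hs00 : s0 = 0%N by apply: s0_lt_m; lia.
rewrite hs00 modz_small; [ring|nia].
Qed.

Lemma yc_pin c c' : (1 <= c)%N -> (c <= m)%N -> (1 <= c')%N -> (c' <= m)%N ->
  yc c c'%:Z = (c == c')%:R.
Proof.
move=> hc1 hc2 hc3 hc4.
have hs0 : s0%:Z = m%:Z * d%:Z by rewrite /s0; lia.
have hk' : k%:Z = m.+1%:Z * a%:Z + s0%:Z by rewrite hs0 hk; lia.
rewrite /yc; suff -> : cls c'%:Z = c'%:Z.
  congr (_%:R); congr nat_of_bool; apply/idP/idP => /eqP h; apply/eqP; lia.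
have [ha|ha] := boolP (1 <= a)%N.
  have hma : m.+1%:Z <= m.+1%:Z * a%:Z by nia.
  rewrite cls_big; [|lia|lia].
  by rewrite modz_small //; lia.
have ha0 : a = 0%N by lia.
have hms : (m <= s0)%N by move: hmk; rewrite hk ha0 muln0 add0n.
rewrite /cls /Pz.
rewrite (@modz_eqv _ 1); [|lia|lia].
have -> : (c'%:Z + s0%:Z - 1 - 1 * k%:Z < s0%:Z) = true by lia.
rewrite (@modz_eqv _ 0); [lia|lia|lia].
Qed.
End Cls.

Lemma nullity_eq (N k m M a d : nat) (e : int) :
  (1 <= k)%N -> k = ((m.+1) * a + m * d)%N -> (m <= k)%N ->
  N%:Z = M%:Z * (k%:Z + 1) - (m * d)%N%:Z -> M%:Z = m%:Z + e * k%:Z ->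
  (k < N)%N -> nullity N k = m.
Proof.
move=> hk hkd hmk hN hM hkN.
have hs : (m * d <= k)%N by rewrite hkd; lia.
rewrite /nullity -mxrank_ker.
set A := Amat N k.
set K := kermx A.
pose P : 'M[rat]_(N, m) := \matrix_(i < N, c < m) ind i (c.+1)%:Z.
have uP : forall v : 'rV[rat]_N, forall c : 'I_m, (v *m P) 0 c = Su v c.+1%:Z.
  by move=> v c; rewrite mxE /Su; apply: eq_bigr => i _; rewrite mxE.
apply/eqP; rewrite eqn_leq; apply/andP; split.
- rewrite -(mxrank_mul_ker K P).
  have -> : \rank (K :&: kermx P)%MS = 0%N.
    apply/eqP; rewrite mxrank_eq0; apply/rowV0P => v hv.
    have hv1 : (v <= K)%MS := submx_trans hv (capmxSl _ _).
    have hv2 : (v <= kermx P)%MS := submx_trans hv (capmxSr _ _).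
    move/sub_kermxP: hv1 => hv1.
    move/sub_kermxP: hv2 => hv2.
    apply: (ker_zero hk hv1 hN hM hs); first by case: (m) => [|m']; [right; lia|left].
      by [].
    move=> c h1 h2.
    have hc : (c.-1 < m)%N by lia.
    have := uP v (Ordinal hc). rewrite hv2 mxE /= => h.
    have -> : c%:Z = (c.-1).+1%:Z by lia.
    by rewrite -h.
  by rewrite addn0 rank_leq_col.
- case: m hkd hmk hN hM hs P uP => [|m] hkd hmk hN hM hs P uP //.
  pose yv (c : nat) := yc k m.+1 d c.
  pose B : 'M[rat]_(m.+1, N) := \matrix_(c < m.+1, i < N) uf k (yv c.+1) N 0 i.
  have hyper : forall c p e, yv c (p + e * k%:Z) = yv c p.
    by move=> c p e'; rewrite /yv yc_per.
  have hCv : forall c : 'I_m.+1, forall r, 1 - (m.+1 * d)%N%:Z <= r ->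
      r <= k%:Z - (m.+1 * d)%N%:Z -> Cval (yv c.+1) m.+1 r = 0.
    move=> c r h1 h2; apply: (Cval_yc (a := a)) => //; lia.
  have rowB : forall c : 'I_m.+1, row c B = uf k (yv c.+1) N.
    by move=> c; apply/rowP => i; rewrite !mxE.
  have BK : (B <= K)%MS.
    apply/sub_kermxP/row_matrixP => c; rewrite row_mul rowB row0.
    exact: (uf_ker (hyper c.+1) hN hM hs (hCv c)).
  have BP : B *m P = 1%:M.
    apply/matrixP => c c'.
    have := uP (row c B) c'. rewrite -row_mul mxE => ->.
    rewrite rowB (Su_uf_small (hyper c.+1) hN hM hs (hCv c)); [|lia|].
      rewrite /yv (yc_pin (a := a)) //; [|lia..].
      by rewrite !mxE eqSS.
    have := ltn_ord c'; lia.
  apply: leq_trans (mxrankS BK).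
  rewrite -{1}(mxrank1 rat m.+1) -BP.
  exact: mxrankM_maxl.
Qed.

Theorem theorem8p10 (k : nat) (a b : int) :
  (1 <= k)%N -> 1 <= b -> 0 <= a -> a <= b ->
  (k%:Z = a %[mod b])%Z ->
  (Nnull (((k%:Z + 1 + a - b) * (k%:Z - a)) %/ b)%Z k)%:Z = ((k%:Z - a) %/ b)%Z.
Proof.
move=> hk hb ha hab hmod.
have [a' ea] : exists a' : nat, a = a'%:Z by exists (absz a); lia.
have [b' eb] : exists b' : nat, b = b'%:Z by exists (absz b); lia.
subst a b.
have hb0 : b'%:Z != 0 by lia.
have [q hq] : exists q : int, k%:Z - a'%:Z = q * b'%:Z.
  exists ((k%:Z %/ b'%:Z)%Z - (a'%:Z %/ b'%:Z)%Z).
  have e1 := divz_eq k%:Z b'%:Z. have e2 := divz_eq a'%:Z b'%:Z.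
  move: hmod e1 e2.
  move: (k%:Z %/ b'%:Z)%Z (a'%:Z %/ b'%:Z)%Z (k%:Z %% b'%:Z)%Z (a'%:Z %% b'%:Z)%Z.
  move=> x y z w -> e1 e2. rewrite {1}e1 {1}e2. ring.
have hq0 : 0 <= q.
  clear hmod. have [//|hneg] := lerP 0 q.
  have h : (q + 1) * b'%:Z <= 0 by apply: mulr_le0_ge0; lia.
  rewrite mulrDl mul1r in h. lia.
have [m em] : exists m : nat, q = m%:Z by exists (absz q); lia.
subst q.
have -> : ((k%:Z - a'%:Z) %/ b'%:Z)%Z = m%:Z by rewrite hq mulzK.
have -> : (((k%:Z + 1 + a'%:Z - b'%:Z) * (k%:Z - a'%:Z)) %/ b'%:Z)%Z
    = (k%:Z + 1 + a'%:Z - b'%:Z) * m%:Z by rewrite hq mulrA mulzK.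
congr Posz.
rewrite /Nnull /rep.
set n := (k%:Z + 1 + a'%:Z - b'%:Z) * m%:Z.
have hK : (0 < (k ^ 2 + k)%N%:Z) by rewrite expnS expn1; lia.
have hr0 := modz_ge0 (n - k.+1%:Z) (d := (k ^ 2 + k)%N%:Z) ltac:(lia).
have hr1 := ltz_pmod (n - k.+1%:Z) (d := (k ^ 2 + k)%N%:Z) hK.
have hdv := divz_eq (n - k.+1%:Z) (k ^ 2 + k)%N%:Z.
have hK2 : (k ^ 2 + k)%N%:Z = k%:Z * (k%:Z + 1) by rewrite expnS expn1; lia.
move: hr0 hr1 hdv.
move: ((n - k.+1%:Z) %/ (k ^ 2 + k)%N%:Z)%Z ((n - k.+1%:Z) %% (k ^ 2 + k)%N%:Z)%Z.
move=> Q r hr0 hr1 hdv.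
rewrite hK2 in hr1 hdv.
set R := (k.+1 + absz r)%N.
have hR : R%:Z = (k%:Z + 1) * (m%:Z - Q * k%:Z) - (m * (b' - a'))%N%:Z.
  rewrite /R /n in hdv *. clear hmod.
  have hr : (absz r)%:Z = r by lia.
  have hk1 : k.+1%:Z = k%:Z + 1 by lia.
  rewrite PoszD hr PoszM -subzn; last by lia.
  rewrite hk1 in hdv *.
  have -> : r = (k%:Z + 1 + a'%:Z - b'%:Z) * m%:Z - (k%:Z + 1) - Q * (k%:Z * (k%:Z + 1))
    by rewrite hdv; ring.
  ring.
have hMpos : 0 <= m%:Z - Q * k%:Z.
  have h : 0 <= (k%:Z + 1) * (m%:Z - Q * k%:Z).
    have -> : (k%:Z + 1) * (m%:Z - Q * k%:Z) = R%:Z + (m * (b' - a'))%N%:Z by rewrite hR; ring.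
    exact: addr_ge0.
  by rewrite pmulr_rge0 in h; lia.

apply: (@nullity_eq R k m (absz (m%:Z - Q * k%:Z)%R) a' (b' - a') (- Q)).
- done.
- clear hmod. lia.
- clear hmod. nia.
- rewrite hR. have -> : (absz (m%:Z - Q * k%:Z)%R)%:Z = m%:Z - Q * k%:Z by lia. ring.
- lia.
- rewrite /R; lia.
Qed.
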